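(* Let $A$ be a $\boldsymbol{\mathit{ba}\ell}$-algebra and $I$ an $\ell$-ideal of $A$. Then the archimedean hull of $I$ is $$[\![I]\!]=\{x\in A\mid (n|x|-1)^+\in I \text{ for all integers } n\ge 1\}.$$
   Context: A $\boldsymbol{\mathit{ba}\ell}$-algebra is a commutative unital lattice-ordered algebra $A$ over $\mathbb R$ that is bounded (for every $a\in A$ there is an integer $n\ge1$ with $a\le n\cdot1$) and archimedean (if $na\le b$ for all $n\ge1$ then $a\le0$); a real $r$ is identified with $r\cdot 1$. For $a\in A$: $a^+=a\vee0$, $a^-=(-a)\vee0$, $|a|=a\vee(-a)$. An $\ell$-ideal is a ring ideal $I$ such that $|a|\le|b|$ and $b\in I$ imply $a\in I$; it is archimedean if $A/I$ is archimedean. For $S\subseteq A$, the archimedean hull $[\![S]\!]$ is the intersection of all archimedean $\ell$-ideals of $A$ containing $S$. *)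

(* Defs.v *)
From HB Require Import structures.
From mathcomp Require Import all_boot all_order all_algebra.
From mathcomp Require Import reals.
Set Implicit Arguments. Unset Strict Implicit. Unset Printing Implicit Defensive.
Import Order.TTheory GRing.Theory Num.Theory.
Local Open Scope ring_scope.

Section BalDefs.
Variables (R : realType) (A : comAlgType R).
Variables (le : A -> A -> Prop) (join : A -> A -> A).

Definition lpos (a : A) : A := join a 0.
Definition lneg (a : A) : A := join (- a) 0.
Definition labs (a : A) : A := join a (- a).

Record ba_ell_algebra : Prop := BaEll {
  le_refl : forall x, le x x;
  le_antisym : forall x y, le x y -> le y x -> x = y;
  le_trans : forall x y z, le x y -> le y z -> le x z;
  (* join is the least upper bound (lattice; meets then exist since
     x /\ y = - ((-x) \/ (-y)) in a lattice-ordered group) *)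
  join_ub_l : forall x y, le x (join x y);
  join_ub_r : forall x y, le y (join x y);
  join_lub : forall x y z, le x z -> le y z -> le (join x y) z;
  le_add : forall x y z, le x y -> le (x + z) (y + z);
  le_mul : forall x y, le 0 x -> le 0 y -> le 0 (x * y);
  le_scale : forall (r : R) x, 0 <= r -> le 0 x -> le 0 (r *: x);
  bounded : forall a, exists n : nat, (1 <= n)%N /\ le a (n%:R);
  archimedean : forall a b, (forall n : nat, (1 <= n)%N -> le (a *+ n) b) ->
                le a 0
}.

Definition ring_ideal (I : A -> Prop) : Prop :=
  [/\ I 0, (forall x y, I x -> I y -> I (x + y)), (forall x, I x -> I (- x))
    & (forall a x, I x -> I (a * x))].

Definition ell_ideal (I : A -> Prop) : Prop :=
  ring_ideal I /\ (forall a b, le (labs a) (labs b) -> I b -> I a).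

(* order of the quotient A/I: [x] <= [y] iff x <= y + i for some i in I
   (the positive cone of A/I is the image of that of A) *)
Definition quot_le (I : A -> Prop) (x y : A) : Prop :=
  exists i, I i /\ le x (y + i).

Definition arch_ideal (I : A -> Prop) : Prop :=
  forall x y, (forall n : nat, (1 <= n)%N -> quot_le I (x *+ n) y) ->
    quot_le I x 0.

Definition arch_hull (S : A -> Prop) (x : A) : Prop :=
  forall J : A -> Prop, ell_ideal J -> arch_ideal J ->
    (forall s, S s -> J s) -> J x.

End BalDefs.

(* Main.v *)
Require Import Defs.
From HB Require Import structures.
From mathcomp Require Import all_boot all_order all_algebra.
From mathcomp Require Import reals ring.
Import Order.TTheory GRing.Theory Num.Theory.
Local Open Scope ring_scope.

Section Proofs.
Variables (R : realType) (A : comAlgType R).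
Variables (le : A -> A -> Prop) (join : A -> A -> A).
Hypothesis HA : ba_ell_algebra le join.

Lemma lt x y z : le x y -> le y z -> le x z.
Proof. exact: (Defs.le_trans HA). Qed.
Arguments lt {x y z}.
Lemma lr x : le x x.
Proof. exact: (Defs.le_refl HA). Qed.

Lemma le_addl x y z : le x y -> le (z + x) (z + y).
Proof. by move=> h; rewrite (addrC z x) (addrC z y); apply: (Defs.le_add HA). Qed.

Lemma le_add2 x y u v : le x y -> le u v -> le (x + u) (y + v).
Proof.
move=> h1 h2; apply: (@lt _ (y + u)); first exact: (Defs.le_add HA).
exact: le_addl.
Qed.

Lemma subge0 x y : le x y <-> le 0 (y - x).
Proof.
split=> h.
  by rewrite -(subrr x); apply: (Defs.le_add HA).
by have := Defs.le_add HA x h; rewrite add0r subrK.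
Qed.

Lemma le_opp x y : le x y -> le (- y) (- x).
Proof. by move=> /subge0 h; apply/subge0; rewrite opprK addrC. Qed.

Lemma mulrn_mono x y n : le x y -> le (x *+ n) (y *+ n).
Proof.
move=> h; elim: n => [|n IH]; first by rewrite !mulr0n; apply: lr.
by rewrite !mulrS; apply: le_add2.
Qed.

Lemma pos_mulrn x n : le 0 x -> le 0 (x *+ n).
Proof. by move=> h; rewrite -(mul0rn _ n); apply: mulrn_mono. Qed.

Lemma pos_add x y : le 0 x -> le 0 y -> le 0 (x + y).
Proof. by move=> h1 h2; rewrite -(addr0 0); apply: le_add2. Qed.

Lemma scale_inv_mulrn (u : A) n : (0 < n)%N -> (n%:R : R)^-1 *: (u *+ n) = u.
Proof.
move=> hn; rewrite -scaler_nat scalerA mulVf ?scale1r //.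
by rewrite pnatr_eq0 -lt0n.
Qed.

Lemma mulrn_scale_inv (u : A) n : (0 < n)%N -> ((n%:R : R)^-1 *: u) *+ n = u.
Proof.
move=> hn; rewrite -scaler_nat scalerA mulfV ?scale1r //.
by rewrite pnatr_eq0 -lt0n.
Qed.

Lemma pos_of_mulrn u n : (0 < n)%N -> le 0 (u *+ n) -> le 0 u.
Proof.
move=> hn h; rewrite -(scale_inv_mulrn u n hn); apply: (Defs.le_scale HA) => //.
by rewrite invr_ge0.
Qed.

Arguments pos_of_mulrn {u n}.
Lemma le_of_mulrn_w z w m : (0 < m)%N -> le (z *+ m) w -> le 0 w -> le z w.
Proof.
case: m => [//|m] _ h hw; apply/subge0; apply: (@pos_of_mulrn _ m.+1) => //.
have -> : (w - z) *+ m.+1 = (w - z *+ m.+1) + w *+ m by ring.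
apply: pos_add; [by move/subge0: h | exact: pos_mulrn].
Qed.

Lemma le_of_mulrn z v n : (0 < n)%N -> le (z *+ n) (v *+ n) -> le z v.
Proof.
move=> hn /subge0 h; apply/subge0; apply: (pos_of_mulrn hn).
by rewrite mulrnBl.
Qed.

Arguments le_of_mulrn {z v n}.
Lemma le01 : le 0 1.
Proof.
have [n [_ hn]] := Defs.bounded HA (-1).
apply: (@pos_of_mulrn _ n.+1) => //.
by move/subge0: hn; rewrite opprK mulrSr.
Qed.

Lemma le0n n : le 0 (n%:R : A).
Proof. exact: pos_mulrn le01. Qed.

Lemma le1n n : le 1 (n.+1%:R : A).
Proof. by apply/subge0; rewrite mulrSr addrK; apply: le0n. Qed.

Lemma labs_ge0 x : le 0 (labs join x).
Proof.
apply: (@pos_of_mulrn _ 2) => //; rewrite mulr2n -(subrr x).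
apply: le_add2; first exact: (Defs.join_ub_l HA).
exact: (Defs.join_ub_r HA).
Qed.

Lemma lpos_ge0 a : le 0 (lpos join a).
Proof. exact: (Defs.join_ub_r HA). Qed.

Lemma ge_lpos a : le a (lpos join a).
Proof. exact: (Defs.join_ub_l HA). Qed.

Lemma ge_labs a : le a (labs join a).
Proof. exact: (Defs.join_ub_l HA). Qed.

Lemma ge_labsN a : le (- a) (labs join a).
Proof. exact: (Defs.join_ub_r HA). Qed.

Lemma lpos_le a w : le a w -> le 0 w -> le (lpos join a) w.
Proof. by move=> h1 h2; apply: (Defs.join_lub HA). Qed.

Lemma lpos_mono a b : le a b -> le (lpos join a) (lpos join b).
Proof.
move=> h; apply: lpos_le; last exact: lpos_ge0.
apply: lt h _; exact: ge_lpos.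
Qed.

Lemma labs_le a w : le a w -> le (- a) w -> le (labs join a) w.
Proof. by move=> h1 h2; apply: (Defs.join_lub HA). Qed.

Lemma labs_pos_le a : le 0 a -> le (labs join a) a.
Proof.
move=> h; apply: labs_le; first exact: lr.
apply: (@lt _ 0 _ _ h); rewrite -oppr0; exact: le_opp.
Qed.

Lemma labs_labs_le a : le (labs join (labs join a)) (labs join a).
Proof. exact: labs_pos_le (labs_ge0 a). Qed.

Lemma labs_pos_mono a b : le 0 a -> le a b -> le (labs join a) (labs join b).
Proof.
move=> h0 h; apply: labs_le; first by apply: lt h _; apply: ge_labs.
apply: (@lt _ a); last by apply: lt h _; apply: ge_labs.
apply: (@lt _ 0 _ _ h0); rewrite -oppr0; exact: le_opp.
Qed.

Lemma solid_pos K : ell_ideal le join K ->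
  forall a b, le 0 a -> le a b -> K b -> K a.
Proof.
move=> [_ hs] a b h0 h Kb; apply: (hs a b) => //.
exact: labs_pos_mono.
Qed.

Arguments solid_pos {K} HK {a b}.
Lemma lpos_mulrn z w m : (0 < m)%N -> le (z *+ m) w -> le 0 w ->
  le (lpos join z *+ m) w.
Proof.
move=> hm h hw; set v := (m%:R : R)^-1 *: w.
have hv : v *+ m = w by rewrite /v mulrn_scale_inv.
rewrite -hv; apply: mulrn_mono; apply: lpos_le.
  by apply: (le_of_mulrn hm); rewrite hv.
by apply: (pos_of_mulrn hm); rewrite hv.
Qed.

Variable I : A -> Prop.
Hypothesis HI : ell_ideal le join I.

Definition J x := forall n : nat, (1 <= n)%N -> I (lpos join (labs join x *+ n - 1)).

Lemma Isolid : forall a b, le (labs join a) (labs join b) -> I b -> I a.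
Proof. by case: HI. Qed.

Lemma I0 : I 0. Proof. by case: HI => -[]. Qed.
Lemma Iadd x y : I x -> I y -> I (x + y). Proof. by case: HI => -[_ h _ _] _; apply: h. Qed.

Lemma J_solid a b : le (labs join a) (labs join b) -> J b -> J a.
Proof.
move=> h Jb n hn; apply: (solid_pos HI (lpos_ge0 _) _ (Jb n hn)).
apply: lpos_mono; apply: (Defs.le_add HA); exact: mulrn_mono.
Qed.

Lemma J0 : J 0.
Proof.
move=> n hn; apply: (solid_pos HI (lpos_ge0 _) _ I0).
apply: lpos_le; last exact: lr.
have h0 : le (labs join 0) 0 by apply: labs_le; rewrite ?oppr0; apply: lr.
apply: (@lt _ (0 - 1)); first by apply: (Defs.le_add HA); have := mulrn_mono _ _ n h0; rewrite mul0rn.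
rewrite add0r -oppr0; apply: le_opp; exact: le01.
Qed.

Lemma J_opp x : J x -> J (- x).
Proof.
apply: J_solid; apply: labs_le; first exact: ge_labsN.
rewrite opprK; exact: ge_labs.
Qed.

Lemma labs_add x y : le (labs join (x + y)) (labs join x + labs join y).
Proof.
apply: labs_le; first by apply: le_add2; apply: ge_labs.
rewrite opprD; apply: le_add2; apply: ge_labsN.
Qed.

Lemma J_add x y : J x -> J y -> J (x + y).
Proof.
move=> Jx Jy n hn.
have hn2 : (1 <= n * 2)%N by rewrite muln_gt0 hn.
set a := labs join x *+ n; set b := labs join y *+ n.
set P := lpos join (a *+ 2 - 1) + lpos join (b *+ 2 - 1).
have IP : I P by apply: Iadd; rewrite -mulrnA; [apply: Jx | apply: Jy].
have P0 : le 0 P by apply: pos_add; apply: lpos_ge0.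
apply: (solid_pos HI (lpos_ge0 _) _ IP); apply: lpos_le => //.
apply: (@lt _ (a + b - 1)).
  by apply: (Defs.le_add HA); rewrite -mulrnDl; apply: mulrn_mono; apply: labs_add.
apply: (@le_of_mulrn_w _ _ 2) => //.
have -> : (a + b - 1) *+ 2 = (a *+ 2 - 1) + (b *+ 2 - 1) by ring.
by apply: le_add2; apply: ge_lpos.
Qed.

Lemma J_labs x : J x -> J (labs join x).
Proof. apply: J_solid; exact: labs_labs_le. Qed.

Lemma J_mulrn x m : J x -> J (x *+ m).
Proof.
move=> Jx; elim: m => [|m IH]; first by rewrite mulr0n; apply: J0.
by rewrite mulrS; apply: J_add.
Qed.

Lemma labs_mul_bound a x : exists m : nat,
  le (labs join (a * x)) (labs join x *+ m).
Proof.
set p := labs join a; set q := labs join a - a.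
set P := labs join x; set Q := labs join x - x.
have p0 : le 0 p by apply: labs_ge0.
have q0 : le 0 q by rewrite /q; apply/(subge0 a); apply: ge_labs.
have P0 : le 0 P by apply: labs_ge0.
have Q0 : le 0 Q by rewrite /Q; apply/(subge0 x); apply: ge_labs.
have [M [_ hM]] := Defs.bounded HA (p + q).
exists (3 * M)%N.
have hax : a * x = (p - q) * (P - Q) by rewrite /p /q /P /Q; ring.
have S0 : le 0 (P + Q) by apply: pos_add.
apply: (@lt _ ((p + q) * (P + Q))).
  rewrite hax; apply: labs_le; apply/subge0.
    have -> : (p + q) * (P + Q) - (p - q) * (P - Q) = (p * Q + q * P) *+ 2 by ring.
    by apply: pos_mulrn; apply: pos_add; apply: (Defs.le_mul HA).
  have -> : (p + q) * (P + Q) - - ((p - q) * (P - Q)) = (p * P + q * Q) *+ 2 by ring.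
  by apply: pos_mulrn; apply: pos_add; apply: (Defs.le_mul HA).
apply: (@lt _ (M%:R * (P + Q))).
  apply/subge0; rewrite -mulrBl; apply: (Defs.le_mul HA) => //.
  by move/subge0: hM.
rewrite mulr_natl mulrnA; apply: mulrn_mono.
apply/subge0.
have -> : P *+ 3 - (P + Q) = P - (- x) by rewrite /P /Q; ring.
apply/(subge0 (- x)); exact: ge_labsN.
Qed.

Lemma J_mul a x : J x -> J (a * x).
Proof.
move=> Jx; have [m hm] := labs_mul_bound a x.
apply: (J_solid _ (labs join x *+ m)); last by apply: J_mulrn; apply: J_labs.
apply: lt hm _; exact: ge_labs.
Qed.

Lemma J_ell : ell_ideal le join J.
Proof.
split; last by move=> a b h Jb; apply: J_solid h Jb.
split; [exact: J0 | exact: J_add | exact: J_opp | exact: J_mul].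
Qed.

Lemma J_arch : arch_ideal le J.
Proof.
move=> x y H.
have [M0 [hM1 hyM]] := Defs.bounded HA y.
case: M0 hM1 hyM => [//|M] _ hyM.
exists (lpos join x); split; last by rewrite add0r; apply: ge_lpos.
move=> k hk.
set n := (k * (M.+1 * 2))%N.
have hn : (1 <= n)%N by rewrite /n !muln_gt0 hk.
have [i [Ji hi]] := H n hn.
set W := M.+1%:R + labs join i.
have W0 : le 0 W by apply: pos_add; [apply: le0n | apply: labs_ge0].
have hxW : le (x *+ n) W.
  by apply: lt hi _; apply: le_add2 => //; apply: ge_labs.
have hpW : le (lpos join x *+ n) W by apply: lpos_mulrn.
set w := lpos join (labs join i *+ 1 - 1).
have Iw : I w by apply: Ji.
have w0 : le 0 w by apply: lpos_ge0.
apply: (solid_pos HI (lpos_ge0 _) _ Iw); apply: lpos_le => //.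
apply: (@lt _ (lpos join x *+ k - 1)).
  apply: (Defs.le_add HA); apply: mulrn_mono; apply: labs_pos_le; exact: lpos_ge0.
apply: (@le_of_mulrn_w _ _ (M.+1 * 2)) => //.
rewrite mulrnBl -mulrnA.
apply: (@lt _ (W - 1 *+ (M.+1 * 2))); first exact: (Defs.le_add HA).
have -> : W - 1 *+ (M.+1 * 2) = labs join i - M.+1%:R by rewrite /W; ring.
apply: (@lt _ (labs join i *+ 1 - 1)); last exact: ge_lpos.
rewrite mulr1n; apply: le_addl; apply: le_opp; exact: le1n.
Qed.

Lemma I_sub_J s : I s -> J s.
Proof.
move=> Is n hn.
have Ia : I (labs join s) by apply: (Isolid _ _ (labs_labs_le s)).
have In : I (labs join s *+ n).
  by elim: (n) => [|m IH]; [rewrite mulr0n; apply: I0 | rewrite mulrS; apply: Iadd].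
apply: (solid_pos HI (lpos_ge0 _) _ In); apply: lpos_le.
  apply/subge0; rewrite opprB addrC subrK; exact: le01.
by apply: pos_mulrn; apply: labs_ge0.
Qed.

Lemma dir1 x : (forall n : nat, (1 <= n)%N -> I (lpos join (labs join x *+ n - 1))) ->
  arch_hull le join I x.
Proof.
move=> H K HK HKa HIK.
have hq : forall n : nat, (1 <= n)%N -> quot_le le K (labs join x *+ n) 1.
  move=> n hn; exists (lpos join (labs join x *+ n - 1)); split.
    by apply: HIK; apply: H.
  have := Defs.le_add HA 1 (ge_lpos (labs join x *+ n - 1)).
  by rewrite subrK addrC.
have [i [Ki hi]] := HKa _ _ hq.
rewrite add0r in hi.
have Kx : K (labs join x).
  case: HK => _ hs; apply: (hs _ i) => //.
  apply: labs_le; first by apply: lt hi _; apply: ge_labs.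
  apply: (@lt _ (labs join x)).
    apply: (@lt _ 0); last exact: labs_ge0.
    rewrite -oppr0; apply: le_opp => //; exact: labs_ge0.
  by apply: lt hi _; apply: ge_labs.
case: HK => _ hs; apply: (hs _ (labs join x)) => //; exact: ge_labs.
Qed.

End Proofs.

Theorem mainTheorem4 (R : realType) (A : comAlgType R)
  (le : A -> A -> Prop) (join : A -> A -> A)
  (HA : ba_ell_algebra le join) (I : A -> Prop) (HI : ell_ideal le join I) :
  forall x : A,
    arch_hull le join I x <->
    (forall n : nat, (1 <= n)%N -> I (lpos join (labs join x *+ n - 1))).
Proof.
move=> x; split.
  move=> H.
  exact: (H (@J R A join I) (@J_ell R A le join HA I HI)
            (@J_arch R A le join HA I HI) (@I_sub_J R A le join HA I HI)).
exact: (@dir1 R A le join HA I x).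
Qed.
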